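(* Let $\kappa\le\lambda<0$ and nonnegative progress values be given, and consider the sequential game $(A^{s},B^{s})$ and the cooperative game $(A^{c},B^{c})$ defined in the context. Suppose that $\max_{i\in\Gamma^1}a^{s}_i>\kappa$ and that there exists $j\in\Gamma^2$ with $b_{i',j}>\lambda$ for every $i'\in\arg\max_{i\in\Gamma^1}a^{s}_i$. Let $\Pi_{s}$ be the set of pairs $(i,j)$ with $i\in\arg\max_{i'\in\Gamma^1}a^{s}_{i'}$ and $j\in\arg\max_{j'\in\Gamma^2}b_{i,j'}$ (equivalently, the set of Nash, and also of Stackelberg, equilibria of the sequential game); let $\Pi_{st}$ be the set of Stackelberg equilibria (P1 leader) of the cooperative game; let $\Pi_{n}$ be the set of Nash equilibria of the cooperative game; and let $\Pi_{n,RoR}$ be the set of those Nash equilibria of the cooperative game that maximize P1's payoff $a^{c}_{i,j}$ among all Nash equilibria of the cooperative game. Then $$\emptyset\neq\Pi_{s}=\Pi_{st}=\Pi_{n,RoR}\subseteq\Pi_{n},$$ and every pair in $\Pi_s$ is feasible.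
   Context: Abstract two-player racing set-up. Player 1 (P1, the leader) chooses a trajectory $i\in\Gamma^1=\{1,\dots,n\}$, player 2 (P2) chooses $j\in\Gamma^2=\{1,\dots,m\}$. Each trajectory has a progress value $P^1_i\ge 0$ (resp. $P^2_j\ge 0$). Each trajectory is either on track or off track, and each pair $(i,j)$ either collides or not. A pair $(i,j)$ is feasible if $i$ and $j$ are both on track and $(i,j)$ does not collide. Constants $\kappa\le\lambda<0$ are fixed. Sequential game: P1's payoff does not depend on $j$: $a^{s}_{i,j}=a^{s}_i=\kappa$ if $i$ is off track, and $a^{s}_i=P^1_i$ otherwise. P2's payoff: $b_{i,j}=\kappa$ if $j$ is off track; otherwise $b_{i,j}=\lambda$ if $(i,j)$ collides; otherwise $b_{i,j}=P^2_j$. Cooperative game: $a^{c}_{i,j}=\kappa$ if $i$ is off track; otherwise $\lambda$ if $(i,j)$ collides; otherwise $P^1_i$. P2's payoff is the same $b_{i,j}$ as in the sequential game. For a bimatrix game $(A,B)$: $R(i)=\arg\max_{j\in\Gamma^2}b_{i,j}$; $(i^*,j^* )$ is a Stackelberg equilibrium with P1 as leader if $i^*\in\arg\max_{i}\min_{j\in R(i)}a_{i,j}$ and $j^*\in R(i^* )$; $(i^*,j^* )$ is a Nash equilibrium if $a_{i^*,j^*}\ge a_{i,j^*}$ for all $i$ and $b_{i^*,j^*}\ge b_{i^*,j}$ for all $j$. Only pure strategies are considered. *)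

(* Defs.v *)
From HB Require Import structures.
From mathcomp Require Import all_boot all_order all_algebra.
Set Implicit Arguments. Unset Strict Implicit. Unset Printing Implicit Defensive.
Import Order.TTheory GRing.Theory Num.Theory.
Local Open Scope ring_scope.

Section Games.
Variable R : realFieldType.

Definition argmax (T : finType) (f : T -> R) : pred T :=
  [pred x | [forall y, f y <= f x]].

(* minimum of a (nonempty) list; value on [::] is irrelevant *)
Definition mins (s : seq R) : R :=
  match s with [::] => 0 | x :: s' => foldr Num.min x s' end.

Variables n m : nat.
Notation payoff := ('I_n -> 'I_m -> R).

Definition BR (B : payoff) (i : 'I_n) : pred 'I_m := argmax (B i).

Definition worst (A B : payoff) (i : 'I_n) : R :=
  mins [seq A i j | j <- enum (BR B i)].

Definition stackelberg (A B : payoff) (p : 'I_n * 'I_m) : bool :=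
  (p.1 \in argmax (worst A B)) && (p.2 \in BR B p.1).

Definition nash (A B : payoff) (p : 'I_n * 'I_m) : bool :=
  [forall i, A i p.2 <= A p.1 p.2] && [forall j, B p.1 j <= B p.1 p.2].

Variables (kappa lambda : R) (P1 : 'I_n -> R) (P2 : 'I_m -> R)
  (on1 : 'I_n -> bool) (on2 : 'I_m -> bool) (coll : 'I_n -> 'I_m -> bool).

Definition feasible (p : 'I_n * 'I_m) : bool :=
  [&& on1 p.1, on2 p.2 & ~~ coll p.1 p.2].

Definition aseq (i : 'I_n) : R := if on1 i then P1 i else kappa.
Definition Aseq : payoff := fun i _ => aseq i.
Definition Acoop : payoff := fun i j =>
  if ~~ on1 i then kappa else if coll i j then lambda else P1 i.
Definition Bpay : payoff := fun i j =>
  if ~~ on2 j then kappa else if coll i j then lambda else P2 j.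

Definition Pi_s : {set 'I_n * 'I_m} :=
  [set p | (p.1 \in argmax aseq) && (p.2 \in argmax (Bpay p.1))].
Definition Pi_st : {set 'I_n * 'I_m} := [set p | stackelberg Acoop Bpay p].
Definition Pi_n : {set 'I_n * 'I_m} := [set p | nash Acoop Bpay p].
Definition Pi_nRoR : {set 'I_n * 'I_m} :=
  [set p in Pi_n | [forall q in Pi_n, Acoop q.1 q.2 <= Acoop p.1 p.2]].
End Games.

(* Main.v *)
Require Import Defs.
From HB Require Import structures.
From mathcomp Require Import all_boot all_order all_algebra.
Import Order.TTheory GRing.Theory Num.Theory.
Local Open Scope ring_scope.

Lemma ex_argmax (R : realFieldType) (T : finType) (f : T -> R) (t : T) :
  exists x, x \in argmax f.
Proof.
case: (@arg_maxP _ R T t predT f isT) => x _ H.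
by exists x; apply/forallP => y; exact: H.
Qed.

Lemma mins_le (R : realFieldType) (s : seq R) y : y \in s -> mins s <= y.
Proof.
case: s => [//|x s] /=.
elim: s x y => [|a s IH] x y /=; first by rewrite inE => /eqP ->.
rewrite !inE => /orP [/eqP ->|/orP [/eqP ->|H]].
- by rewrite ge_min (IH x x) ?inE ?eqxx ?orbT.
- by rewrite ge_min lexx.
- by rewrite ge_min (IH x y) ?inE ?H ?orbT.
Qed.

Lemma mins_in (R : realFieldType) (s : seq R) : s != [::] -> mins s \in s.
Proof.
case: s => [//|x s] _ /=.
elim: s x => [|a s IH] x /=; first by rewrite inE.
have := IH x; rewrite !inE /Order.min; case: ifP => _; first by rewrite eqxx orbT.
by case/orP => ->; rewrite ?orbT.
Qed.

Theorem theorem1 (R : realFieldType) (n m : nat) (kappa lambda : R)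
  (P1 : 'I_n -> R) (P2 : 'I_m -> R)
  (on1 : 'I_n -> bool) (on2 : 'I_m -> bool) (coll : 'I_n -> 'I_m -> bool)
  (hkl : kappa <= lambda) (hl : lambda < 0)
  (hP1 : forall i, 0 <= P1 i) (hP2 : forall j, 0 <= P2 j)
  (hmax : exists i, (i \in argmax (aseq kappa P1 on1)) /\ kappa < aseq kappa P1 on1 i)
  (hj : exists j, forall i', i' \in argmax (aseq kappa P1 on1) ->
          lambda < Bpay kappa lambda P2 on2 coll i' j) :
  let Ps := Pi_s kappa lambda P1 P2 on1 on2 coll in
  let Pst := Pi_st kappa lambda P1 P2 on1 on2 coll in
  let Pn := Pi_n kappa lambda P1 P2 on1 on2 coll in
  let PnRoR := Pi_nRoR kappa lambda P1 P2 on1 on2 coll in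
  [/\ Ps != set0, Ps = Pst, Pst = PnRoR, PnRoR \subset Pn &
      forall p, p \in Ps -> feasible on1 on2 coll p].
Proof.
move=> Ps Pst Pn PnRoR.
case: hmax => i0 [Mi0 ki0]; case: hj => j0 Hj0.
set a := aseq kappa P1 on1 in Mi0 ki0 Hj0 Ps Pst Pn PnRoR *.
set B := Bpay kappa lambda P2 on2 coll in Hj0 Ps Pst Pn PnRoR *.
set Ac := Acoop kappa lambda P1 on1 coll in Pst Pn PnRoR *.
have F1 : forall i j, Ac i j <= a i.
  move=> i j; rewrite /Ac /a /Acoop /aseq.
  case: (on1 i) => //=; case: (coll i j) => //.
  exact: le_trans (ltW hl) (hP1 i).
have Mle : forall i, a i <= a i0 by move=> i; move/forallP: Mi0.
have Meq : forall i, i \in argmax a -> a i = a i0.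
  by move=> i /forallP Hi; apply/eqP; rewrite eq_le Mle Hi.
have F2 : forall i j, i \in argmax a -> j \in BR B i ->
    feasible on1 on2 coll (i, j) /\ Ac i j = a i0.
  move=> i j Mi /forallP Bj.
  have Bl := lt_le_trans (Hj0 i Mi) (Bj j0).
  have oi : on1 i.
    apply/negPn/negP => Hn; move: ki0; rewrite -(Meq i Mi) /a /aseq.
    by rewrite (negbTE Hn) ltxx.
  move: Bl; rewrite /B /Bpay.
  case oj: (on2 j) => /=; last by rewrite ltNge hkl.
  case cj: (coll i j); first by rewrite ltxx.
  move=> _; split; first by rewrite /feasible /= oi oj cj.
  by rewrite -(Meq i Mi) /Ac /Acoop /a /aseq oi cj.
have F3 : forall i, exists j, j \in BR B i by move=> i; exact: ex_argmax j0.
have W1 : forall i, i \in argmax a -> worst Ac B i = a i0.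
  move=> i Mi; case: (F3 i) => j Bj.
  have : mins [seq Ac i j | j <- enum (BR B i)] \in [seq Ac i j | j <- enum (BR B i)].
    apply: mins_in; apply/eqP => E.
    have : j \in enum (BR B i) by rewrite mem_enum.
    by move=> /(map_f (fun j => Ac i j)); rewrite E.
  rewrite /worst; case/mapP => j' + ->; rewrite mem_enum => Bj'.
  by case: (F2 i j' Mi Bj').
have W2 : forall i, i \notin argmax a -> worst Ac B i < a i0.
  move=> i /forallPn [y]; rewrite -ltNge => Hy.
  case: (F3 i) => j Bj.
  apply: le_lt_trans (lt_le_trans Hy (Mle y)).
  apply: le_trans (F1 i j); apply: mins_le.
  by apply: (map_f (fun j => Ac i j)); rewrite mem_enum.
have AW : forall i, (i \in argmax (worst Ac B)) = (i \in argmax a).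
  move=> i; case Mi: (i \in argmax a).
    apply/forallP => y; rewrite (W1 i Mi).
    case My: (y \in argmax a); first by rewrite W1.
    by apply: ltW; apply: W2; rewrite My.
  apply/negbTE/negP => /forallP /(_ i0); rewrite (W1 i0 Mi0) leNgt.
  by rewrite W2 ?Mi.
have PsE : forall p, (p \in Ps) = (p.1 \in argmax a) && (p.2 \in BR B p.1).
  by move=> p; rewrite inE.
have PsN : forall p, p \in Ps -> p \in Pn /\ Ac p.1 p.2 = a i0.
  move=> [i j]; rewrite PsE /= => /andP [Mi Bj].
  case: (F2 i j Mi Bj) => _ Ae; split=> //.
  rewrite inE /nash /= -/Ac -/B Ae; apply/andP; split; last by move/forallP: Bj => H; apply/forallP.
  by apply/forallP => k; apply: le_trans (F1 k j) (Mle k).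
case: (F3 i0) => j1 Bj1.
have Pi01 : (i0, j1) \in Ps by rewrite PsE /= Mi0 Bj1.
have PsPst : Ps = Pst.
  by apply/setP => p; rewrite PsE /Pst /Pi_st in_set /stackelberg -/Ac -/B AW.
have PsR : Ps = PnRoR.
  apply/setP => p; apply/idP/idP => Hp.
    case: (PsN p Hp) => Hn Ae; rewrite /PnRoR /Pi_nRoR in_set -/Pn Hn /= -/Ac Ae.
    apply/forallP => q; apply/implyP => _; exact: le_trans (F1 _ _) (Mle _).
  move: Hp; rewrite /PnRoR /Pi_nRoR in_set -/Pn -/Ac => /andP [Hn /forallP /(_ (i0, j1))].
  case: (PsN _ Pi01) => -> /= Ae; rewrite Ae => Hle.
  move: Hn; rewrite /Pn /Pi_n in_set /nash -/B => /andP [_ /forallP Hb].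
  rewrite PsE; apply/andP; split; last by apply/forallP.
  apply/forallP => y; apply: le_trans (Mle y) _.
  exact: le_trans Hle (F1 _ _).
split.
- by apply/set0Pn; exists (i0, j1).
- exact: PsPst.
- by rewrite -PsPst.
- by apply/subsetP => p; rewrite inE => /andP [].
- move=> [i j]; rewrite PsE /= => /andP [Mi Bj]; by case: (F2 i j Mi Bj).
Qed.
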